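(* Let $G$ be a nilpotent $p$-group ($p$ prime) whose first Ulm factor $G/G_0$ has bounded period. Then $G_0$ is divisible.
   Context: For a nilpotent $p$-group $G$, the height of $g\in G$ is the greatest $n$ with $g=h^{p^n}$ for some $h\in G$; if no greatest such $n$ exists, $g$ has infinite height. $G_0$ is the (normal) subgroup of elements of infinite height, and $G/G_0$ is the first Ulm factor. Bounded period means there is $n\ge1$ with $x^n=1$ for all elements $x$. Divisible means every element has an $n$-th root in the group for every $n\ge1$. *)

(* Defs.v *)
From mathcomp Require Import all_boot.
Set Implicit Arguments. Unset Strict Implicit. Unset Printing Implicit Defensive.

Section GroupDefs.
Variables (T : Type) (mul : T -> T -> T) (inv : T -> T) (one : T).

Record is_group : Prop := IsGroup {
  mulA : forall x y z, mul x (mul y z) = mul (mul x y) z;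
  mul1g : forall x, mul one x = x;
  mulVg : forall x, mul (inv x) x = one
}.

Fixpoint gpow (x : T) (n : nat) : T :=
  if n is k.+1 then mul x (gpow x k) else one.

Definition comm (x y : T) : T := mul (inv x) (mul (inv y) (mul x y)).

Fixpoint upper_central (i : nat) : T -> Prop :=
  match i with
  | 0 => fun x => x = one
  | i'.+1 => fun x => forall y, upper_central i' (comm x y)
  end.

Definition nilpotent : Prop := exists c, forall x, upper_central c x.

Definition p_group (p : nat) : Prop := forall x, exists k, gpow x (p ^ k) = one.

Definition height_ge (p : nat) (g : T) (n : nat) : Prop :=
  exists h, gpow h (p ^ n) = g.

(* Since 1 = 0-th power trivially and the set of such n is downward closed,
   this literally reads: the set of such n has no greatest element. *)
Definition infinite_height (p : nat) (g : T) : Prop :=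
  ~ (exists n, height_ge p g n /\ forall m, height_ge p g m -> m <= n).

Definition G0 (p : nat) : T -> Prop := infinite_height p.

(* the first Ulm factor G/G_0 has bounded period:
   some n >= 1 with (x G_0)^n = G_0, i.e. x^n in G_0, for all x *)
Definition ulm_factor_bounded (p : nat) : Prop :=
  exists n, 0 < n /\ forall x, G0 p (gpow x n).

Definition divisible_subgroup (H : T -> Prop) : Prop :=
  forall g, H g -> forall n, 0 < n -> exists h, H h /\ gpow h n = g.

End GroupDefs.

(* Main.v *)
Require Import Defs.
From mathcomp Require Import all_boot.
From mathcomp Require Import cyclic.
From Stdlib Require Import Classical.
Set Implicit Arguments. Unset Strict Implicit.

Section Aux.
Variables (T : Type) (mul : T -> T -> T) (inv : T -> T) (one : T).
Hypothesis G : is_group mul inv one.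

Lemma mulgV' x : mul x (inv x) = one.
Proof.
case: G => mA m1 mV.
have e : mul x (inv x) = mul (mul (inv (inv x)) (inv x)) (mul x (inv x)) by rewrite mV m1.
by rewrite e -mA (mA (inv x)) mV m1 mV.
Qed.

Lemma mulg1' x : mul x one = x.
Proof.
case: G => mA m1 mV.
by rewrite -(mV x) mA mulgV' m1.
Qed.

Lemma gpowD x a b : gpow mul one x (a + b) = mul (gpow mul one x a) (gpow mul one x b).
Proof.
case: G => mA m1 mV.
elim: a => [|a IH] /=; first by rewrite m1.
by rewrite IH mA.
Qed.

Lemma gpow1g b : gpow mul one one b = one.
Proof. case: G => mA m1 mV. by elim: b => //= b ->; rewrite m1. Qed.

Lemma gpowM x a b : gpow mul one x (a * b) = gpow mul one (gpow mul one x a) b.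
Proof.
elim: b => [|b IH]; first by rewrite muln0.
by rewrite mulnS gpowD IH.
Qed.

Lemma gpow1 x : gpow mul one x 1 = x.
Proof. by rewrite /= mulg1'. Qed.

Lemma gpowC x a b : gpow mul one (gpow mul one x a) b = gpow mul one (gpow mul one x b) a.
Proof. by rewrite -!gpowM mulnC. Qed.

Lemma gpow_mod x a d : gpow mul one x d = one -> gpow mul one x (a %% d) = gpow mul one x a.
Proof.
case: G => mA m1 mV => xd.
by rewrite {2}(divn_eq a d) gpowD mulnC gpowM xd gpow1g m1.
Qed.

Variable p : nat.
Hypothesis pr : prime p.
Hypothesis pg : p_group mul one p.

Lemma coprime_root m : coprime m p -> forall x, exists a, gpow mul one (gpow mul one x a) m = x.
Proof.
move=> cm x; have [k xk] := pg x.
have cmd : coprime m (p ^ k) by apply: coprimeXr.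
have Eu := Euler_exp_totient cmd.
have tg : 0 < totient (p ^ k) by rewrite totient_gt0 expn_gt0 prime_gt0.
exists (m ^ (totient (p ^ k)).-1).
rewrite -gpowM -expnSr prednK // -(gpow_mod _ xk) Eu (gpow_mod _ xk).
exact: gpow1.
Qed.

Lemma height_down g m k : height_ge mul one p g m -> k <= m -> height_ge mul one p g k.
Proof.
move=> [h hm] km; exists (gpow mul one h (p ^ (m - k))).
by rewrite -gpowM -expnD subnK.
Qed.

Lemma G0_all g : G0 mul one p g -> forall N, height_ge mul one p g N.
Proof.
move=> Hg N; apply: NNPP => nN; apply: Hg.
elim: N nN => [|N IH] nN.
  by exfalso; apply: nN; exists g; rewrite expn0 gpow1.
case: (classic (height_ge mul one p g N)) => hN; last exact: IH.
exists N; split => // m hm; rewrite leqNgt; apply/negP => lt.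
by apply: nN; apply: height_down hm lt.
Qed.

Lemma all_G0 g : (forall N, height_ge mul one p g N) -> G0 mul one p g.
Proof.
move=> H [n [_ Hn]]; have := Hn _ (H n.+1); by rewrite ltnn.
Qed.

Lemma G0_pow g a : G0 mul one p g -> G0 mul one p (gpow mul one g a).
Proof.
move=> Hg; apply: all_G0 => N; have [h <-] := G0_all Hg N.
by exists (gpow mul one h a); rewrite gpowC.
Qed.

Lemma decomp n : 0 < n -> exists e m, coprime m p /\ n = p ^ e * m.
Proof.
elim: n {-2}n (leqnn n) => [|N IH] n lenN n0; first by case: n n0 lenN.
case: (boolP (p %| n)) => pn; last first.
  by exists 0, n; rewrite mul1n coprime_sym prime_coprime.
have p1 := prime_gt1 pr.
have lt := ltn_Pdiv p1 n0.
have n0' : 0 < n %/ p by rewrite divn_gt0 ?prime_gt0 // dvdn_leq.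
have [e [m [cm E]]] := IH (n %/ p) (leq_trans (lt) lenN : n %/ p <= N) n0'.
exists e.+1, m; split => //.
by rewrite -(divnK pn) E expnSr mulnAC.
Qed.

End Aux.

Theorem lemma2 (T : Type) (mul : T -> T -> T) (inv : T -> T) (one : T) (p : nat) :
  is_group mul inv one ->
  prime p ->
  p_group mul one p ->
  nilpotent mul inv one ->
  ulm_factor_bounded mul one p ->
  divisible_subgroup mul one (G0 mul one p).
Proof.
move=> G pr pg _ [b0 [n0p Hb]].
have [e [m0 [cm0 E0]]] := decomp pr n0p.
have He : forall x, G0 mul one p (gpow mul one x (p ^ e)).
  move=> x; have [a xa] := coprime_root G pr pg cm0 x.
  by rewrite -xa -(gpowM G) mulnC -E0.
have Hp : forall g, G0 mul one p g -> exists h, G0 mul one p h /\ gpow mul one h p = g.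
  move=> g Hg; have [x xg] := G0_all G Hg e.+1.
  exists (gpow mul one x (p ^ e)); split; first exact: He.
  by rewrite -(gpowM G) -expnSr.
move=> g Hg n; elim: n {-2}n (leqnn n) g Hg => [|N IH] n lenN g Hg n0.
  by case: n n0 lenN.
case: (boolP (p %| n)) => pn.
  have p1 := prime_gt1 pr.
  have n0' : 0 < n %/ p by rewrite divn_gt0 ?prime_gt0 // dvdn_leq.
  have [w [Hw wg]] := IH (n %/ p) (leq_trans (ltn_Pdiv p1 n0) lenN) g Hg n0'.
  have [u [Hu uw]] := Hp w Hw.
  exists u; split => //; by rewrite -(divnK pn) mulnC (gpowM G) uw.
have cn : coprime n p by rewrite coprime_sym prime_coprime.
have [a ga] := coprime_root G pr pg cn g.
by exists (gpow mul one g a); split => //; exact: (G0_pow G).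
Qed.
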